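(* Consider the value iteration algorithm described in the context, producing functions $V^n$ for $n\ge0$. Then for every $n\ge 0$, every $s\in\mathcal{S}$ and every $k\in\{1,\dots,K-1\}$, $$V^{n}(s,k+1)-V^{n}(s,k)\ \le\ V^{n}(s,k)-V^{n}(s,k-1).$$
   Context: Model (token-based D2D transmission for one user). Let $\mathcal{S}=\{s_0,s_1,\dots,s_N\}$ be a finite set of traffic types, where $s_0$ denotes the idle state. Each $s\in\mathcal{S}$ has a probability $p(s)\in(0,1)$ with $\sum_{s\in\mathcal{S}}p(s)=1$. Each non-idle type $s\in\{s_1,\dots,s_N\}$ has a benefit $b_s$, with $0<b_{s_1}<\dots<b_{s_N}$. Fix an integer $K\ge1$, a cost $c>0$, parameters $p,q\in(0,1)$ and a discount factor $\beta\in(0,1)$. States are $(s,k)$ with $s\in\mathcal{S}$, $k\in\{0,\dots,K\}$; actions are $a\in\{0,1\}$. Transition probabilities $P\{(s',k')\mid(s,k),a\}$: for $s\ne s_0,k>0$: $p(s')\{(1-a)+a(1-q)\}$ if $k'=k$, $p(s')qa$ if $k'=k-1$; for $s\ne s_0,k=0$: $p(s')$ if $k'=0$; for $s=s_0,k<K$: $p(s')\{a+(1-a)(1-p)\}$ if $k'=k$, $p(s')p(1-a)$ if $k'=k+1$; for $s=s_0,k=K$: $p(s')$ if $k'=K$; otherwise $0$. Expected rewards: $\mu(s_0,k,a)=-cp(1-a)$ and, for $s\ne s_0$, $\mu(s,k,a)=q\,a\,b_s\,I(k>0)$. Value iteration: $V^0(s,k)=0$ for all $(s,k)$. Given $V^n$,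 define the policy $\pi^{n+1}$ by $\pi^{n+1}(s,0)=0$ for $s\ne s_0$, $\pi^{n+1}(s_0,K)=1$; for $s\ne s_0$ and $k\ge1$, $\pi^{n+1}(s,k)=0$ if $\beta\sum_{s'\in\mathcal{S}}p(s')\{V^n(s',k)-V^n(s',k-1)\}\ge b_s$ and $\pi^{n+1}(s,k)=1$ otherwise; for $k<K$, $\pi^{n+1}(s_0,k)=0$ if $\beta\sum_{s'\in\mathcal{S}}p(s')\{V^n(s',k+1)-V^n(s',k)\}\ge c$ and $\pi^{n+1}(s_0,k)=1$ otherwise. Then $V^{n+1}(s,k)=\mu(s,k,\pi^{n+1}(s,k))+\beta\sum_{(s',k')}P\{(s',k')\mid(s,k),\pi^{n+1}(s,k)\}V^n(s',k')$. *)

(* Defs.v *)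
From mathcomp Require Import all_boot all_order all_algebra.
Set Implicit Arguments. Unset Strict Implicit. Unset Printing Implicit Defensive.
Import Order.TTheory GRing.Theory Num.Theory.
Local Open Scope ring_scope.

(* Traffic types S = {s_0,...,s_N} are encoded as 'I_N.+1, with ord0 = s_0 the
   idle state.  Token levels k range over {0,...,K} (encoded as nat, k <= K). *)

Section Model.
Variables (R : realFieldType) (N K : nat).
Variables (ps : 'I_N.+1 -> R) (b : 'I_N.+1 -> R) (c p q beta : R).

Definition idle (s : 'I_N.+1) : bool := s == ord0.

Definition trans (s : 'I_N.+1) (k : nat) (a : bool) (s' : 'I_N.+1) (k' : nat) : R :=
  let ar : R := (a : nat)%:R in
  if ~~ idle s then
    if (0 < k)%N then
      if k' == k then ps s' * ((1 - ar) + ar * (1 - q))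
      else if k' == k.-1 then ps s' * q * ar
      else 0
    else (if k' == 0%N then ps s' else 0)
  else
    if (k < K)%N then
      if k' == k then ps s' * (ar + (1 - ar) * (1 - p))
      else if k' == k.+1 then ps s' * p * (1 - ar)
      else 0
    else (if k' == K then ps s' else 0).

Definition mu (s : 'I_N.+1) (k : nat) (a : bool) : R :=
  let ar : R := (a : nat)%:R in
  if idle s then - c * p * (1 - ar)
  else q * ar * b s * (if (0 < k)%N then 1 else 0).

Definition policy (V : 'I_N.+1 -> nat -> R) (s : 'I_N.+1) (k : nat) : bool :=
  if ~~ idle s then
    if k == 0%N then false
    else ~~ (beta * \sum_(s' < N.+1) ps s' * (V s' k - V s' k.-1) >= b s)
  else
    if k == K then true
    else ~~ (beta * \sum_(s' < N.+1) ps s' * (V s' k.+1 - V s' k) >= c).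

Definition vi_step (V : 'I_N.+1 -> nat -> R) (s : 'I_N.+1) (k : nat) : R :=
  let a := policy V s k in
  mu s k a + beta * \sum_(s' < N.+1) \sum_(k' < K.+1) trans s k a s' k' * V s' k'.

Fixpoint VI (n : nat) : 'I_N.+1 -> nat -> R :=
  match n with
  | 0%N => fun _ _ => 0
  | n'.+1 => vi_step (VI n')
  end.

End Model.

(* Main.v *)
Require Import Defs.
From mathcomp Require Import all_boot all_order all_algebra.
From mathcomp Require Import ring lra.
Import Order.TTheory GRing.Theory Num.Theory.
Set Implicit Arguments. Unset Strict Implicit.
Local Open Scope ring_scope.

Lemma sum_pick (R : realFieldType) (K : nat) (F : nat -> R) j : (j <= K)%N ->
  \sum_(k < K.+1) (if (k:nat) == j then F k else 0) = F j.
Proof.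
move=> hj; have hj' : (j < K.+1)%N by [].
rewrite (bigD1 (Ordinal hj')) //= eqxx big1 ?addr0 // => i hi.
case: eqP => // hij; exfalso; move/eqP: hi; apply; exact: val_inj.
Qed.

Lemma sum_pick1 (R : realFieldType) (K : nat) (A : R) (W : nat -> R) j : (j <= K)%N ->
  \sum_(k < K.+1) (if (k:nat) == j then A else 0) * W k = A * W j.
Proof.
move=> hj; rewrite -(sum_pick (fun k => A * W k) hj); apply: eq_bigr => k _.
by case: eqP => [->|]; rewrite ?mul0r.
Qed.

Lemma sum2 (R : realFieldType) (K : nat) (A B : R) (W : nat -> R) j j' :
  (j <= K)%N -> (j' <= K)%N -> j' != j ->
  \sum_(k < K.+1) (if (k:nat) == j then A else if (k:nat) == j' then B else 0) * W k
  = A * W j + B * W j'.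
Proof.
move=> hj hj' hne.
rewrite (eq_bigr (fun k : 'I_K.+1 => (if (k:nat) == j then A * W k else 0)
   + (if (k:nat) == j' then B * W k else 0))).
  by rewrite big_split /= (sum_pick (fun k => A * W k) hj) (sum_pick (fun k => B * W k) hj').
move=> k _; have [->|hkj] := eqVneq (k:nat) j.
  by rewrite eq_sym (negbTE hne) addr0.
by rewrite add0r; case: eqP; rewrite ?mul0r.
Qed.

Lemma sum_const (R : realFieldType) n (f g : 'I_n -> R) a :
  \sum_(i < n) (f i * a * g i) = a * \sum_(i < n) f i * g i.
Proof. by rewrite mulr_sumr; apply: eq_bigr => i _; ring. Qed.

Lemma sumB (R : realFieldType) n (f g h : 'I_n -> R) :
  \sum_(i < n) f i * (g i - h i) = \sum_(i < n) f i * g i - \sum_(i < n) f i * h i.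
Proof. by rewrite -sumrB; apply: eq_bigr => i _; ring. Qed.

Lemma step_ni R N K ps b c p q beta V (s : 'I_N.+1) j :
  s != ord0 -> (0 < j)%N -> (j <= K)%N ->
  @vi_step R N K ps b c p q beta V s j =
  beta * \sum_(s' < N.+1) ps s' * V s' j +
  (if b s <= beta * (\sum_(s' < N.+1) ps s' * V s' j - \sum_(s' < N.+1) ps s' * V s' j.-1) then 0
   else q * (b s - beta * (\sum_(s' < N.+1) ps s' * V s' j - \sum_(s' < N.+1) ps s' * V s' j.-1))).
Proof.
move=> hs hj hjK.
have hj0 : (j == 0%N) = false by case: j hj {hjK}.
have hne : j.-1 != j by case: j hj {hjK hj0} => //= j' _; rewrite neq_ltn ltnSn.
have hj1 : (j.-1 <= K)%N by apply: leq_trans (leq_pred j) hjK.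
rewrite /vi_step /policy /mu /trans /idle (negbTE hs) hj0 hj /=.
rewrite sumB; case: (b s <= _) => /=.
  under eq_bigr => s' _ do rewrite (sum2 _ _ _ hjK hj1 hne).
  rewrite big_split /= !sum_const; ring.
under eq_bigr => s' _ do rewrite (sum2 _ _ _ hjK hj1 hne).
rewrite big_split /= !sum_const; ring.
Qed.

Lemma step_ni0 R N K ps b c p q beta V (s : 'I_N.+1) :
  s != ord0 ->
  @vi_step R N K ps b c p q beta V s 0 = beta * \sum_(s' < N.+1) ps s' * V s' 0%N.
Proof.
move=> hs.
rewrite /vi_step /policy /mu /trans /idle (negbTE hs) /=.
under eq_bigr => s' _ do rewrite (sum_pick1 _ _ (leq0n K)).
by rewrite !mulr0 add0r.
Qed.

Lemma step_iK R N K ps b c p q beta V (s : 'I_N.+1) :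
  s == ord0 ->
  @vi_step R N K ps b c p q beta V s K = beta * \sum_(s' < N.+1) ps s' * V s' K.
Proof.
move=> hs.
rewrite /vi_step /policy /mu /trans /idle hs eqxx ltnn /=.
under eq_bigr => s' _ do rewrite (sum_pick1 _ _ (leqnn K)).
by rewrite subrr mulr0 add0r.
Qed.

Lemma step_i R N K ps b c p q beta V (s : 'I_N.+1) j :
  s == ord0 -> (j < K)%N ->
  @vi_step R N K ps b c p q beta V s j =
  beta * \sum_(s' < N.+1) ps s' * V s' j +
  (if c <= beta * (\sum_(s' < N.+1) ps s' * V s' j.+1 - \sum_(s' < N.+1) ps s' * V s' j)
   then p * (beta * (\sum_(s' < N.+1) ps s' * V s' j.+1 - \sum_(s' < N.+1) ps s' * V s' j) - c)
   else 0).
Proof.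
move=> hs hjK.
have hjK' : (j == K) = false by rewrite ltn_eqF.
have hne : j.+1 != j by rewrite neq_ltn ltnSn orbT.
have hj1 : (j <= K)%N by apply: ltnW.
rewrite /vi_step /policy /mu /trans /idle hs hjK hjK' /=.
rewrite sumB; case: (c <= _) => /=.
  under eq_bigr => s' _ do rewrite (sum2 _ _ _ hj1 hjK hne).
  rewrite big_split /= !sum_const; ring.
under eq_bigr => s' _ do rewrite (sum2 _ _ _ hj1 hjK hne).
rewrite big_split /= !sum_const; ring.
Qed.

Lemma core_ni (R : realFieldType) (q bb y2 y1 F0 : R) :
  0 < q < 1 -> y2 <= y1 ->
  F0 <= (if bb <= y1 then 0 else q * (bb - y1)) ->
  y2 + (if bb <= y2 then 0 else q * (bb - y2)) - (if bb <= y1 then 0 else q * (bb - y1))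
  <= y1 + (if bb <= y1 then 0 else q * (bb - y1)) - F0.
Proof.
case/andP=> hq0 hq1 h21.
have H1 : 0 <= (1 - q) * (y1 - y2) by apply: mulr_ge0; lra.
case: (lerP bb y2) => h2; case: (lerP bb y1) => h1 => hF.
- lra.
- lra.
- have H2 : 0 <= q * (y1 - bb) by apply: mulr_ge0; lra.
  have H3 : 0 <= (1 - q) * (bb - y2) by apply: mulr_ge0; lra.
  nra.
- nra.
Qed.

Lemma F_mono (R : realFieldType) (q bb y1 y0 : R) : 0 < q -> y1 <= y0 ->
  (if bb <= y0 then 0 else q * (bb - y0)) <= (if bb <= y1 then 0 else q * (bb - y1)).
Proof. move=> hq h; case: (lerP bb y0) => h0; case: (lerP bb y1) => h1; nra. Qed.

Lemma F_ge0 (R : realFieldType) (q bb y1 : R) : 0 < q ->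
  0 <= (if bb <= y1 then 0 else q * (bb - y1)).
Proof. move=> hq; case: (lerP bb y1) => h1; nra. Qed.

Lemma core_i (R : realFieldType) (p c y2 y1 G3 : R) :
  0 < p < 1 -> y2 <= y1 ->
  G3 <= (if c <= y2 then p * (y2 - c) else 0) ->
  y2 + G3 - (if c <= y2 then p * (y2 - c) else 0)
  <= y1 + (if c <= y2 then p * (y2 - c) else 0) - (if c <= y1 then p * (y1 - c) else 0).
Proof.
case/andP=> hp0 hp1 h21.
have H1 : 0 <= (1 - p) * (y1 - y2) by apply: mulr_ge0; lra.
case: (lerP c y2) => h2; case: (lerP c y1) => h1 => hG.
- nra.
- lra.
- have H2 : 0 <= p * (y1 - c) by apply: mulr_ge0; lra.
  have H3 : 0 <= (1 - p) * (y1 - c) by apply: mulr_ge0; lra.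
  nra.
- lra.
Qed.

Lemma G_mono (R : realFieldType) (p c y3 y2 : R) : 0 < p -> y3 <= y2 ->
  (if c <= y3 then p * (y3 - c) else 0) <= (if c <= y2 then p * (y2 - c) else 0).
Proof. move=> hp h; case: (lerP c y3) => h0; case: (lerP c y2) => h1; nra. Qed.

Lemma G_ge0 (R : realFieldType) (p c y : R) : 0 < p ->
  0 <= (if c <= y then p * (y - c) else 0).
Proof. move=> hp; case: (lerP c y) => h1; nra. Qed.


Lemma step_ni' R N K ps b c p q beta V (s : 'I_N.+1) j :
  s != ord0 -> (j < K)%N ->
  @vi_step R N K ps b c p q beta V s j.+1 =
  beta * \sum_(s' < N.+1) ps s' * V s' j.+1 +
  (if b s <= beta * (\sum_(s' < N.+1) ps s' * V s' j.+1 - \sum_(s' < N.+1) ps s' * V s' j) then 0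
   else q * (b s - beta * (\sum_(s' < N.+1) ps s' * V s' j.+1 - \sum_(s' < N.+1) ps s' * V s' j))).
Proof. by move=> hs hj; rewrite (step_ni ps b c p q beta V hs (ltn0Sn j) hj). Qed.

Lemma step_iK' R N K ps b c p q beta V (s : 'I_N.+1) j :
  s == ord0 -> j = K ->
  @vi_step R N K ps b c p q beta V s j = beta * \sum_(s' < N.+1) ps s' * V s' j.
Proof. by move=> hs ->; exact: step_iK. Qed.


Lemma lin (R : realFieldType) (beta U2 U1 U0 G3 G2 G1 : R) :
  beta * (U2 - U1) + G3 - G2 <= beta * (U1 - U0) + G2 - G1 ->
  beta * U2 + G3 - (beta * U1 + G2) <= beta * U1 + G2 - (beta * U0 + G1).
Proof. move=> H; lra. Qed.

Lemma lin3 (R : realFieldType) (beta U2 U1 U0 G2 G1 : R) :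
  beta * (U2 - U1) + 0 - G2 <= beta * (U1 - U0) + G2 - G1 ->
  beta * U2 - (beta * U1 + G2) <= beta * U1 + G2 - (beta * U0 + G1).
Proof. move=> H; lra. Qed.

Lemma lin1 (R : realFieldType) (beta U2 U1 U0 G3 G2 : R) :
  beta * (U2 - U1) + G3 - G2 <= beta * (U1 - U0) + G2 - 0 ->
  beta * U2 + G3 - (beta * U1 + G2) <= beta * U1 + G2 - beta * U0.
Proof. move=> H; lra. Qed.

Theorem theorem1 (R : realFieldType) (N K : nat)
  (ps : 'I_N.+1 -> R) (b : 'I_N.+1 -> R) (c p q beta : R)
  (hps : forall s, 0 < ps s < 1)
  (hsum : \sum_(s < N.+1) ps s = 1)
  (hb0 : forall s : 'I_N.+1, s != ord0 -> 0 < b s)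
  (hbmono : forall s t : 'I_N.+1, s != ord0 -> (s < t)%N -> b s < b t)
  (hK : (1 <= K)%N) (hc : 0 < c)
  (hp : 0 < p < 1) (hq : 0 < q < 1) (hbeta : 0 < beta < 1) :
  forall (n : nat) (s : 'I_N.+1) (k : nat), (1 <= k)%N -> (k <= K.-1)%N ->
    @VI R N K ps b c p q beta n s k.+1 - @VI R N K ps b c p q beta n s k
      <= @VI R N K ps b c p q beta n s k - @VI R N K ps b c p q beta n s k.-1.
Proof.
move=> n; elim: n => [|n IH] s k hk1 hkK; first by rewrite /= !subrr.
set V := @VI R N K ps b c p q beta n.
have hU : forall j, (1 <= j)%N -> (j <= K.-1)%N ->
    \sum_(s' < N.+1) ps s' * V s' j.+1 - \sum_(s' < N.+1) ps s' * V s' j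
    <= \sum_(s' < N.+1) ps s' * V s' j - \sum_(s' < N.+1) ps s' * V s' j.-1.
  move=> j hj1 hjK; rewrite -!sumB; apply: ler_sum => s' _.
  apply: ler_wpM2l; first by case/andP: (hps s') => /ltW.
  exact: IH.
have hb : 0 <= beta by case/andP: hbeta => /ltW.
have hyle : forall x y : R, x <= y -> beta * x <= beta * y.
  by move=> x y hxy; apply: ler_wpM2l.
have hU' : forall j, (j.+1 <= K.-1)%N ->
    \sum_(s' < N.+1) ps s' * V s' j.+2 - \sum_(s' < N.+1) ps s' * V s' j.+1
    <= \sum_(s' < N.+1) ps s' * V s' j.+1 - \sum_(s' < N.+1) ps s' * V s' j.
  by move=> j hj; exact: (hU j.+1 isT hj).
have hq0 : 0 < q by case/andP: hq.
have hp0 : 0 < p by case/andP: hp.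
change (@VI R N K ps b c p q beta n.+1) with (@vi_step R N K ps b c p q beta V).
case: k hk1 hkK => // k' _ hkK; change (k'.+1.-1) with k'.
have hk2 : (k'.+2 <= K)%N by move: hkK; rewrite -ltnS prednK.
have h21 := hyle _ _ (hU' k' hkK).
case: (boolP (s == ord0)) => hs.
-
  rewrite (step_i ps b c p q beta V hs hk2) (step_i ps b c p q beta V hs (ltnW hk2)).
  case: (ltnP k'.+2 K) => hk3.
  + rewrite (step_i ps b c p q beta V hs hk3).
    have hk4 : (k'.+2 <= K.-1)%N by move: hk3; rewrite -(prednK hK) ltnS.
    have h32 := hyle _ _ (hU' k'.+1 hk4).
    exact: lin (core_i hp h21 (G_mono c hp0 h32)).
  + rewrite (step_iK' ps b c p q beta V hs (_ : k'.+2 = K)); last by apply/eqP; rewrite eqn_leq hk2 hk3.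
    exact: lin3 (core_i hp h21 (G_ge0 c _ hp0)).
-
  rewrite (step_ni' ps b c p q beta V hs hk2) (step_ni' ps b c p q beta V hs (ltnW hk2)).
  case: k' hkK hk2 h21 => [|k''] hkK hk2 h21.
  + rewrite (step_ni0 K ps b c p q beta V hs).
    exact: lin1 (core_ni hq h21 (F_ge0 (b s) _ hq0)).
  + rewrite (step_ni' ps b c p q beta V hs (ltnW (ltnW hk2))).
    have h10 := hyle _ _ (hU' k'' (ltnW hkK)).
    exact: lin (core_ni hq h21 (F_mono (b s) hq0 h10)).
Qed.
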